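(* Let $G$ be a simple graph with $n$ vertices and independence number $\alpha(G)$. Then the multiplicity of $1$ as a root of $P(\mathcal{H}_{\bullet G},\lambda)$ equals $n-\alpha(G)$.
   Context: A hypergraph $\mathcal{H}=(\mathcal{V},\mathcal{E})$ consists of a finite vertex set $\mathcal{V}$ and a set $\mathcal{E}$ of subsets of $\mathcal{V}$, each of size at least $1$, called edges. For a positive integer $\lambda$, a weak proper $\lambda$-colouring of $\mathcal{H}$ is a map $\phi:\mathcal{V}\to\{1,\dots,\lambda\}$ such that $|\{\phi(v):v\in e\}|>1$ for every $e\in\mathcal{E}$. $P(\mathcal{H},\lambda)$ denotes the number of weak proper $\lambda$-colourings of $\mathcal{H}$; it is a polynomial in $\lambda$ of degree $|\mathcal{V}|$. For a simple graph $G=(V,E)$, $\mathcal{H}_{\bullet G}$ is the hypergraph with vertex set $V\cup\{w\}$, where $w\notin V$ is a new vertex, and edge set $\{\{u,v,w\}: uv\in E\}$. *)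

(* Defs.v *)
From HB Require Import structures.
From mathcomp Require Import all_boot all_order all_algebra.
Set Implicit Arguments. Unset Strict Implicit. Unset Printing Implicit Defensive.
Import Order.TTheory GRing.Theory Num.Theory.

Definition weak_proper (V : finType) (E : {set {set V}}) (k : nat)
  (phi : {ffun V -> 'I_k}) : bool :=
  [forall e in E, 1 < #|[set phi v | v in e]|]%N.

Definition num_weak_colourings (V : finType) (E : {set {set V}}) (k : nat) : nat :=
  #|[set phi : {ffun V -> 'I_k} | weak_proper E phi]|.

Definition simple_graph (T : finType) (g : rel T) : Prop :=
  symmetric g /\ irreflexive g.

(* H_{\bullet G}: vertex set option T (None is the new vertex w),
   edges {u, v, w} for each edge uv of G. *)
Definition Hbullet_edges (T : finType) (g : rel T) : {set {set option T}} :=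
  [set [set Some u.1; Some u.2; None] | u in [set u : T * T | g u.1 u.2]].

Definition independent (T : finType) (g : rel T) (S : {set T}) : bool :=
  [forall u in S, forall v in S, ~~ g u v].

Definition independence_number (T : finType) (g : rel T) : nat :=
  \max_(S : {set T} | independent g S) #|S|.

(* p is the chromatic polynomial of (V,E): it agrees with P(H, k) at every
   positive integer k (this determines p uniquely). *)
Definition is_chrom_poly (V : finType) (E : {set {set V}}) (p : {poly rat}) : Prop :=
  forall k : nat, (0 < k)%N -> (p.[k%:R] = (num_weak_colourings E k)%:R)%R.

(* Main.v *)
Require Import Defs.
From HB Require Import structures.
From mathcomp Require Import all_boot all_order all_algebra.
Import Order.TTheory GRing.Theory Num.Theory.
Set Implicit Arguments. Unset Strict Implicit.

Lemma card3_gt1 (U : finType) (x y z : U) :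
  (1 < #|[set x; y; z]|)%N = ~~ ((x == z) && (y == z)).
Proof.
have [/eqP-> /=|xz] := boolP (x == z).
  have [/eqP-> /=|yz] := boolP (y == z).
    by rewrite !setUid cards1.
  apply/card_gt1P; exists y, z; rewrite !inE !eqxx yz; split => //; by rewrite orbT.
apply/card_gt1P; exists x, z; rewrite !inE !eqxx xz; split => //; by rewrite !orbT.
Qed.

Lemma imset3 (U V : finType) (f : U -> V) a b c :
  [set f x | x in [set a; b; c]] = [set f a; f b; f c].
Proof.
apply/setP => y; apply/imsetP/idP.
- by move=> [x]; rewrite !inE; case/orP => [/orP []|] /eqP -> ->; rewrite !eqxx ?orbT.
- by rewrite !inE; case/orP => [/orP []|] /eqP ->; [exists a|exists b|exists c]; rewrite ?inE ?eqxx ?orbT.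
Qed.

Lemma weakE (T : finType) (g : rel T) k (phi : {ffun option T -> 'I_k}) :
  weak_proper (Hbullet_edges g) phi =
  independent g [set v | phi (Some v) == phi None].
Proof.
apply/forall_inP/forall_inP.
- move=> H u; rewrite inE => Hu; apply/forall_inP => v; rewrite inE => Hv.
  apply/negP => guv.
  have := H [set Some u; Some v; None].
  have -> : [set Some u; Some v; None] \in Hbullet_edges g.
    by apply/imsetP; exists (u, v); rewrite ?inE.
  have -> : [set phi x | x in [set Some u; Some v; None]] = [set phi (Some u); phi (Some v); phi None].
    exact: imset3.
  by rewrite card3_gt1 Hu Hv => /(_ isT).
- move=> H e /imsetP [[u v]]; rewrite inE /= => guv ->.
  have -> : [set phi x | x in [set Some u; Some v; None]] = [set phi (Some u); phi (Some v); phi None].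
    exact: imset3.
  rewrite card3_gt1; apply/negP => /andP [Hu Hv].
  have := H u; rewrite inE Hu => /(_ isT) /forall_inP /(_ v).
  by rewrite inE Hv guv => /(_ isT).
Qed.
Lemma prod_option (T : finType) (f : option T -> nat) :
  \prod_(x : option T) f x = f None * \prod_(v : T) f (Some v).
Proof.
rewrite (bigD1 None) //=; congr (_ * _).
rewrite (reindex_omap Some id) /=; last by case.
by apply: eq_bigl => v; rewrite eqxx.
Qed.
Lemma foldr_prod (U : finType) (f : U -> nat) :
  foldr muln 1 [seq f x | x : U] = \prod_(x : U) f x.
Proof.
rewrite /image_mem foldr_map -big_enum /=.
elim: (enum U) => [|a s IH]; by rewrite ?big_nil ?big_cons //= IH.
Qed.
Lemma card_fam (T : finType) k (c : 'I_k) (S : {set T}) :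
  #|[pred phi : {ffun option T -> 'I_k} | (phi None == c) && [forall v, (phi (Some v) == c) == (v \in S)]]| = (k.-1) ^ (#|T| - #|S|).
Proof.
pose F := fun x : option T => match x with None => pred1 c | Some v => if v \in S then pred1 c else predC1 c end : pred 'I_k.
have := card_family F.
rewrite foldr_prod prod_option /= card1 mul1n.
have -> : \prod_(v : T) #|F (Some v)| = \prod_(v : T | v \notin S) k.-1.
  rewrite [RHS]big_mkcond /=; apply: eq_bigr => v _ /=.
  by case: (v \in S); rewrite /= ?card1 // cardC1 card_ord.
rewrite prod_nat_const.
have -> : #|[pred v | v \notin S]| = #|T| - #|S|.
  have -> : #|[pred v | v \notin S]| = #|~: S| by apply: eq_card => v; rewrite !inE.
  by rewrite cardsCs setCK.
move <-; apply: eq_card => phi; rewrite !inE.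
apply/andP/familyP.
- move=> [/eqP H1 /forallP H2] [v|] /=; last by rewrite inE H1.
  have := H2 v; case: (v \in S) => /= /eqP; rewrite !inE => ->; by rewrite ?eqxx.
- move=> H; split; first by have := H None; rewrite /= inE.
  apply/forallP => v; have := H (Some v) => /=.
  by case: (v \in S); rewrite !inE; case: (phi (Some v) == c).
Qed.

Lemma count_weak (T : finType) (g : rel T) k :
  num_weak_colourings (Hbullet_edges g) k =
  k * \sum_(S : {set T} | independent g S) k.-1 ^ (#|T| - #|S|).
Proof.
rewrite /num_weak_colourings.
pose b := fun (c : 'I_k) (S : {set T}) (phi : {ffun option T -> 'I_k}) =>
  (phi None == c) && [forall v, (phi (Some v) == c) == (v \in S)].
have E1 : #|[set phi : {ffun option T -> 'I_k} | weak_proper (Hbullet_edges g) phi]| =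
   \sum_phi \sum_(c : 'I_k) \sum_(S : {set T} | independent g S) (b c S phi : nat).
  rewrite -sum1_card big_mkcond /=; apply: eq_bigr => phi _; rewrite inE weakE.
  rewrite (bigD1 (phi None)) //= [X in _ + X]big1 ?addn0; last first.
    move=> c /negbTE Hc; apply: big1 => S _; by rewrite /b eq_sym Hc.
  set S0 := [set v | phi (Some v) == phi None].
  have HS : forall S : {set T}, [forall v, (phi (Some v) == phi None) == (v \in S)] = (S == S0).
    move=> S; apply/forallP/eqP.
    - move=> H; apply/setP => v; rewrite inE; by have := H v => /eqP.
    - by move=> -> v; rewrite inE.
  rewrite /b eqxx /=.
  case: (boolP (independent g S0)) => H.
    rewrite (bigD1 S0) //= HS eqxx big1 // => S /andP [_ /negbTE]; by rewrite HS => ->.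
  rewrite big1 // => S HS'; rewrite HS; case: eqP => // E; by move: H; rewrite -E HS'.
rewrite E1 exchange_big /=.
under eq_bigr do rewrite exchange_big /=.
transitivity (\sum_(c < k) \sum_(S : {set T} | independent g S) k.-1 ^ (#|T| - #|S|)); last by rewrite big_const_ord iter_addn_0 mulnC.
apply: eq_bigr => c _; apply: eq_bigr => S _.
rewrite -(@card_fam T k c S) -sum1_card [RHS]big_mkcond /=.
by apply: eq_bigr => phi _; rewrite inE.
Qed.

Local Open Scope ring_scope.

Lemma poly_eq_nat (p q : {poly rat}) :
  (forall k : nat, (0 < k)%N -> p.[k%:R] = q.[k%:R]) -> p = q.
Proof.
move=> H; apply/eqP; rewrite -subr_eq0; apply/eqP.
apply: (@roots_geq_poly_eq0 _ _ [seq (i.+1)%:R | i <- iota 0 (size (p - q))]).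
- by apply/allP => x /mapP [i _ ->]; rewrite rootE !hornerE H // subrr eqxx.
- have inj : injective (fun i : nat => (i.+1)%:R : rat) by move=> i1 j1 /eqP; rewrite eqr_nat => /eqP [].
  by rewrite (map_inj_uniq inj) iota_uniq.
- by rewrite size_map size_iota.
Qed.

Definition P0 (T : finType) (g : rel T) : {poly rat} :=
  'X * \sum_(S : {set T} | independent g S) ('X - 1%:P) ^+ (#|T| - #|S|).

Lemma P0_chrom (T : finType) (g : rel T) : is_chrom_poly (Hbullet_edges g) (P0 g).
Proof.
move=> k k0; rewrite count_weak natrM natr_sum /P0 hornerM hornerX horner_sum.
congr (_ * _); apply: eq_bigr => S _.
rewrite horner_exp !hornerE natrX -subn1 natrB //.
Qed.

Lemma indep0 (T : finType) (g : rel T) : independent g set0.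
Proof. by apply/forall_inP => u; rewrite inE. Qed.

Lemma alpha_le (T : finType) (g : rel T) S : independent g S -> (#|S| <= independence_number g)%N.
Proof. by move=> H; apply: (leq_bigmax_cond S H). Qed.

Lemma alpha_leT (T : finType) (g : rel T) : (independence_number g <= #|T|)%N.
Proof. by apply/bigmax_leqP => S _; apply: max_card. Qed.

Lemma alpha_attained (T : finType) (g : rel T) :
  exists2 S, independent g S & #|S| = independence_number g.
Proof.
have [|S HS E] := @eq_bigmax_cond _ (fun S : {set T} => independent g S) (fun S => #|S|).
  by apply/card_gt0P; exists set0; apply: indep0.
by exists S => //; rewrite /independence_number; apply/esym; exact: E.
Qed.

Lemma mup_P0 (T : finType) (g : rel T) :
  mup (1 : rat) (P0 g) = (#|T| - independence_number g)%N.
Proof.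
set a := independence_number g.
pose R := \sum_(S : {set T} | independent g S) ('X - (1 : rat)%:P) ^+ (a - #|S|).
have -> : P0 g = ('X - 1%:P) ^+ (#|T| - a) * ('X * R).
  rewrite /P0 /R [RHS]mulrCA; congr (_ * _); rewrite mulr_sumr; apply: eq_bigr => S HS.
  rewrite -exprD; congr (_ ^+ _).
  move: (alpha_le HS) (alpha_leT g); rewrite -/a => h1 h2; by rewrite addnBA // subnK.
rewrite mupMl ?mup_XsubCX ?eqxx //.
rewrite rootE hornerM hornerX mul1r /R horner_sum.
have -> : \sum_(S | independent g S) (('X - (1:rat)%:P) ^+ (a - #|S|)).[1] =
          (\sum_(S | independent g S) (a - #|S| == 0)%N : nat)%:R.
  rewrite natr_sum; apply: eq_bigr => S _.
  by rewrite horner_exp !hornerE subrr expr0n.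
rewrite pnatr_eq0 -lt0n.
have [S0 HS0 HS0a] := alpha_attained g.
by rewrite (bigD1 S0) //= HS0a subnn.
Qed.

Theorem mainTheorem2 (T : finType) (g : rel T) :
  simple_graph g ->
  (exists p : {poly rat}, is_chrom_poly (Hbullet_edges g) p) /\
  (forall p : {poly rat}, is_chrom_poly (Hbullet_edges g) p ->
     mup (1 : rat) p = (#|T| - independence_number g)%N).
Proof.
move=> _; split; first by exists (P0 g); apply: P0_chrom.
move=> p Hp; rewrite (@poly_eq_nat p (P0 g)) ?mup_P0 // => k k0.
by rewrite Hp // P0_chrom.
Qed.
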